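(* A small semicategory $A$ is exponentiable in the category $\mathbf{Semicat}$ of small semicategories and semifunctors if and only if every morphism $f$ of $A$ admits a unique binary factorization, i.e. there is exactly one composable pair $(g,h)$ of morphisms of $A$ with $f=g\cdot h$.
   Context: A semicategory consists of a directed graph $A_1\rightrightarrows A_0$ with an associative composition $A_1\times_{A_0}A_1\to A_1$ (identity morphisms are not required); a semifunctor is a graph morphism preserving composition. An object $A$ is exponentiable if the functor $(-)\times A:\mathbf{Semicat}\to\mathbf{Semicat}$ has a right adjoint. The notation $g\cdot h$ denotes the composite of the composable pair $(g,h)$. *)

(* Defs.v *)
Record Semicat : Type := {
  Ob : Type;
  Hom : Ob -> Ob -> Type;
  comp : forall x y z : Ob, Hom y z -> Hom x y -> Hom x z;
  comp_assoc : forall (w x y z : Ob) (k : Hom y z) (g : Hom x y) (h : Hom w x),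
      comp w y z k (comp w x y g h) = comp w x z (comp x y z k g) h
}.

Arguments Hom {_} _ _.
Arguments comp {_ _ _ _} _ _.

Record Semifunctor (C D : Semicat) : Type := {
  fobj : Ob C -> Ob D;
  fmor : forall x y : Ob C, Hom x y -> Hom (fobj x) (fobj y);
  fmor_comp : forall (x y z : Ob C) (g : Hom y z) (h : Hom x y),
      fmor x z (comp g h) = comp (fmor y z g) (fmor x y h)
}.

Arguments fobj {_ _} _ _.
Arguments fmor {_ _} _ {_ _} _.

Definition sf_comp {C D E : Semicat} (G : Semifunctor D E) (F : Semifunctor C D)
  : Semifunctor C E.
Proof.
  refine {| fobj := fun x => fobj G (fobj F x);
            fmor := fun x y f => fmor G (fmor F f) |}.
  intros x y z g h. rewrite (fmor_comp _ _ F), (fmor_comp _ _ G). reflexivity.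
Defined.

Definition prod_sc (C A : Semicat) : Semicat.
Proof.
  refine {| Ob := (Ob C * Ob A)%type;
            Hom := fun p q => (Hom (fst p) (fst q) * Hom (snd p) (snd q))%type;
            comp := fun p q r g h => (comp (fst g) (fst h), comp (snd g) (snd h)) |}.
  intros w x y z k g h. simpl. rewrite !comp_assoc. reflexivity.
Defined.

Definition prod_map_id {C D : Semicat} (A : Semicat) (G : Semifunctor C D)
  : Semifunctor (prod_sc C A) (prod_sc D A).
Proof.
  refine {| fobj := fun p : Ob (prod_sc C A) => (fobj G (fst p), snd p) : Ob (prod_sc D A);
            fmor := fun p q (f : @Hom (prod_sc C A) p q) =>
                      ((fmor G (fst f), snd f) : @Hom (prod_sc D A) (fobj G (fst p), snd p) (fobj G (fst q), snd q)) |}.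
  intros x y z g h. simpl. rewrite (fmor_comp _ _ G). reflexivity.
Defined.

(* A is exponentiable iff (-) x A : Semicat -> Semicat has a right adjoint,
   expressed by the standard pointwise form: for every B a couniversal arrow
   (B^A, ev : B^A x A -> B) from (-) x A to B. *)
Definition exponentiable (A : Semicat) : Prop :=
  forall B : Semicat,
    exists (E : Semicat) (ev : Semifunctor (prod_sc E A) B),
      forall (C : Semicat) (F : Semifunctor (prod_sc C A) B),
        exists! G : Semifunctor C E, sf_comp ev (prod_map_id A G) = F.

Definition unique_binary_factorization (A : Semicat) : Prop :=
  forall (x z : Ob A) (f : Hom x z),
    exists! p : {y : Ob A & (Hom y z * Hom x y)%type},
      f = comp (fst (projT2 p)) (snd (projT2 p)).

(* Main.v *)
Require Import Defs.
From Stdlib Require Import List FunctionalExtensionality ProofIrrelevance Eqdep ClassicalEpsilon Classical.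
Import ListNotations.

Definition Arr (D : Semicat) := {p : (Ob D * Ob D)%type & Hom (fst p) (snd p)}.
Definition arr {D : Semicat} {x y : Ob D} (m : Hom x y) : Arr D :=
  existT (fun p : (Ob D * Ob D)%type => Hom (fst p) (snd p)) (x, y) m.

Lemma arr_inj {D : Semicat} {x y : Ob D} (m m' : Hom x y) : arr m = arr m' -> m = m'.
Proof. intro H. unfold arr in H. apply inj_pair2 in H. exact H. Qed.

Lemma arr_idx {D : Semicat} {x y x' y' : Ob D} (m : Hom x y) (m' : Hom x' y') :
  arr m = arr m' -> x = x' /\ y = y'.
Proof. intro H. apply (f_equal (@projT1 _ _)) in H. simpl in H. inversion H. auto. Qed.

Lemma arr_comp {D : Semicat} {x y z x' y' z' : Ob D} (g : Hom y z) (h : Hom x y) (g' : Hom y' z') (h' : Hom x' y') :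
  arr g = arr g' -> arr h = arr h' -> arr (comp g h) = arr (comp g' h').
Proof.
  intros H1 H2. destruct (arr_idx _ _ H1) as [-> ->]. destruct (arr_idx _ _ H2) as [-> _].
  apply arr_inj in H1. apply arr_inj in H2. subst. reflexivity.
Qed.

Lemma sf_ext {C D : Semicat} (F G : Semifunctor C D) :
  (forall x, fobj F x = fobj G x) ->
  (forall x y (m : Hom x y), arr (fmor F m) = arr (fmor G m)) -> F = G.
Proof.
  destruct F as [fo fm fc], G as [go gm gc]; simpl. intros Ho Hm.
  assert (fo = go) by (apply functional_extensionality; exact Ho). subst go.
  assert (fm = gm).
  { apply functional_extensionality_dep; intro x.
    apply functional_extensionality_dep; intro y.
    apply functional_extensionality_dep; intro m.
    apply arr_inj. apply Hm. }
  subst gm. f_equal. apply proof_irrelevance.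
Qed.

Lemma sf_arr {C D : Semicat} (F G : Semifunctor C D) : F = G ->
  forall x y (m : Hom x y), arr (fmor F m) = arr (fmor G m).
Proof. intros ->. reflexivity. Qed.

Lemma sf_obj {C D : Semicat} (F G : Semifunctor C D) : F = G ->
  forall x, fobj F x = fobj G x.
Proof. intros ->. reflexivity. Qed.

Lemma transpose_comp {A C C' E B : Semicat} (ev : Semifunctor (prod_sc E A) B)
  (G : Semifunctor C E) (H : Semifunctor C' C) :
  sf_comp ev (prod_map_id A (sf_comp G H)) = sf_comp (sf_comp ev (prod_map_id A G)) (prod_map_id A H).
Proof. apply sf_ext; intros; reflexivity. Qed.

Definition Hom2 (x y : bool) : Type := if x then Empty_set else if y then unit else Empty_set.

Definition comp2 (x y z : bool) (g : Hom2 y z) (h : Hom2 x y) : Hom2 x z.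
Proof. destruct x, y, z; simpl in *; try destruct g; try destruct h; exact tt. Defined.

Definition Two : Semicat.
Proof.
  refine {| Ob := bool; Hom := Hom2; comp := comp2 |}.
  intros w x y z k g h. destruct w, x, y, z; simpl in *;
      try (destruct k; fail); try (destruct g; fail); try (destruct h; fail).
Defined.

Definition One0 : Semicat.
Proof.
  refine {| Ob := unit; Hom := fun _ _ => Empty_set; comp := fun x y z g h => match g with end |}.
  intros. destruct k.
Defined.

Inductive P3 := q0 | q1 | q2.
Definition HomP (x y : P3) : Type :=
  match x, y with q0, q1 | q1, q2 | q0, q2 => unit | _, _ => Empty_set end.

Lemma unit_eq (u v : unit) : u = v. Proof. destruct u, v; reflexivity. Qed.

Definition compP (x y z : P3) (g : HomP y z) (h : HomP x y) : HomP x z.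
Proof. destruct x, y, z; simpl in *; try exact tt; try destruct g; try destruct h. Defined.

Definition PP : Semicat.
Proof.
  refine {| Ob := P3; Hom := HomP; comp := compP |}.
  intros w x y z k g h. destruct w, x, y, z; simpl in *;
      try (destruct k; fail); try (destruct g; fail); try (destruct h; fail); apply unit_eq.
Defined.

Definition mk2 (E : Semicat) (o0 o1 : Ob E) (m : Hom o0 o1) : Semifunctor Two E.
Proof.
  refine {| fobj := fun b : Ob Two => if b then o1 else o0;
            fmor := fun x y => match x as x', y as y' return Hom2 x' y' -> Hom (if x' then o1 else o0) (if y' then o1 else o0) with
                    | false, true => fun _ => m
                    | true, _ => fun e => match e with end
                    | false, false => fun e => match e with end end |}.
  intros x y z g h. destruct x, y, z; simpl in *;
      try (destruct g; fail); try (destruct h; fail).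
Defined.

Lemma eta2 (E : Semicat) (H : Semifunctor Two E) :
  H = mk2 E (fobj H false) (fobj H true) (@fmor _ _ H false true tt).
Proof.
  apply sf_ext.
  - intros []; reflexivity.
  - intros [] [] m; simpl in m; destruct m; reflexivity.
Qed.

Definition pt (E : Semicat) (o : Ob E) : Semifunctor One0 E.
Proof.
  refine {| fobj := fun _ => o; fmor := fun x y (e : @Hom One0 x y) => match e with end |}.
  intros x y z g. destruct g.
Defined.

Definition mkP (E : Semicat) (o0 o1 o2 : Ob E) (m1 : Hom o0 o1) (m2 : Hom o1 o2) : Semifunctor PP E.
Proof.
  pose (fo := fun q : P3 => match q with q0 => o0 | q1 => o1 | q2 => o2 end).
  refine (Build_Semifunctor PP E fo (fun x y => match x as x', y as y' return HomP x' y' -> Hom (fo x') (fo y') with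
                    | q0, q1 => fun _ => m1
                    | q1, q2 => fun _ => m2
                    | q0, q2 => fun _ => comp m2 m1
                    | q0, q0 => fun e => match e with end
                    | q1, q0 => fun e => match e with end
                    | q1, q1 => fun e => match e with end
                    | q2, _ => fun e => match e with end
                    end) _).
  intros x y z g h. destruct x, y, z; simpl in *;
      try (destruct g; fail); try (destruct h; fail); reflexivity.
Defined.

Lemma mkP_split (E : Semicat) (o0 o1 o1' o2 : Ob E) (m1 : Hom o0 o1) (m2 : Hom o1' o2) (e : o1 = o1') :
  exists G : Semifunctor PP E, sf_comp G (mk2 PP q0 q1 tt) = mk2 E o0 o1 m1 /\
                               sf_comp G (mk2 PP q1 q2 tt) = mk2 E o1' o2 m2.
Proof.
  subst o1'. exists (mkP E o0 o1 o2 m1 m2). split; apply sf_ext;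
    try (intros []; reflexivity); intros [] [] m; simpl in m; destruct m; reflexivity.
Qed.

Lemma pair_to_P (E : Semicat) (Ga Gb : Semifunctor Two E) : fobj Ga true = fobj Gb false ->
  exists G : Semifunctor PP E, sf_comp G (mk2 PP q0 q1 tt) = Ga /\ sf_comp G (mk2 PP q1 q2 tt) = Gb.
Proof.
  intro H. rewrite (eta2 E Ga), (eta2 E Gb). apply mkP_split. exact H.
Qed.

Definition BL (T : Type) : Semicat.
Proof.
  refine {| Ob := unit; Hom := fun _ _ => list T; comp := fun _ _ _ g h => g ++ h |}.
  intros. apply app_assoc.
Defined.

Lemma transp_uniq (A B E : Semicat) (ev : Semifunctor (prod_sc E A) B)
  (U : forall (C : Semicat) (F : Semifunctor (prod_sc C A) B),
        exists! G : Semifunctor C E, sf_comp ev (prod_map_id A G) = F)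
  (C : Semicat) (G1 G2 : Semifunctor C E) :
  sf_comp ev (prod_map_id A G1) = sf_comp ev (prod_map_id A G2) -> G1 = G2.
Proof.
  intro H. destruct (U C (sf_comp ev (prod_map_id A G2))) as [G [_ HG]].
  rewrite <- (HG G1 H). apply HG. reflexivity.
Qed.

Section Nec.
Variable A : Semicat.
Definition TT := (Arr A + Arr A)%type.

Lemma fac_exists (HA : exponentiable A) (x z : Ob A) (f : Hom x z) :
  exists p : {y : Ob A & (Hom y z * Hom x y)%type}, f = comp (fst (projT2 p)) (snd (projT2 p)).
Proof.
  apply NNPP; intro Hno.
  destruct (HA (BL TT)) as [E [ev U]].
  pose (tgt := @arr (prod_sc PP A) (q0, x) (q2, z) ((tt, f) : @Hom (prod_sc PP A) (q0, x) (q2, z))).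
  pose (F1 := Build_Semifunctor (prod_sc PP A) (BL TT) (fun _ => tt)
                (fun p q m => (@nil TT : @Hom (BL TT) tt tt)) (fun _ _ _ _ _ => eq_refl)).
  assert (Hc : forall p q r (g : @Hom (prod_sc PP A) q r) (h : @Hom (prod_sc PP A) p q),
    (if excluded_middle_informative (arr (comp g h) = tgt) then [inl (arr f)] else []) =
    (if excluded_middle_informative (arr g = tgt) then [inl (arr f)] else [])
     ++ (if excluded_middle_informative (arr h = tgt) then [inl (arr f) : TT] else [])).
  { intros [pp pa] [qq qa] [rr ra] [g1 g2] [h1 h2].
    destruct (excluded_middle_informative (arr ((g1, g2) : @Hom (prod_sc PP A) (qq, qa) (rr, ra)) = tgt)) as [e|_].
    { destruct (arr_idx _ _ e) as [e1 _]. inversion e1; subst. destruct pp; destruct h1. }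
    destruct (excluded_middle_informative (arr ((h1, h2) : @Hom (prod_sc PP A) (pp, pa) (qq, qa)) = tgt)) as [e|_].
    { destruct (arr_idx _ _ e) as [_ e1]. inversion e1; subst. destruct rr; destruct g1. }
    destruct (excluded_middle_informative _) as [e|_]; [|reflexivity].
    exfalso. destruct (arr_idx _ _ e) as [e1 e2]. inversion e1; inversion e2; subst.
    apply arr_inj in e. simpl in e. inversion e.
    apply Hno. exists (existT _ qa (g2, h2)). simpl. symmetry; assumption. }
  pose (F2 := Build_Semifunctor (prod_sc PP A) (BL TT) (fun _ => tt)
                (fun p q m => (if excluded_middle_informative (arr m = tgt) then [inl (arr f)] else []
                  : @Hom (BL TT) tt tt)) Hc).
  destruct (U _ F1) as [G1 [HG1 _]].
  destruct (U _ F2) as [G2 [HG2 _]].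
  assert (Ha : sf_comp G1 (mk2 PP q0 q1 tt) = sf_comp G2 (mk2 PP q0 q1 tt)).
  { apply (transp_uniq _ _ _ ev U). rewrite !transpose_comp, HG1, HG2.
    apply sf_ext; [reflexivity|]. intros [b a] [b' a'] [m1 m2].
    destruct b, b'; simpl in m1; destruct m1. simpl.
    destruct (excluded_middle_informative _) as [e|_]; [|reflexivity].
    exfalso; destruct (arr_idx _ _ e) as [_ e2]; inversion e2. }
  assert (Hb : sf_comp G1 (mk2 PP q1 q2 tt) = sf_comp G2 (mk2 PP q1 q2 tt)).
  { apply (transp_uniq _ _ _ ev U). rewrite !transpose_comp, HG1, HG2.
    apply sf_ext; [reflexivity|]. intros [b a] [b' a'] [m1 m2].
    destruct b, b'; simpl in m1; destruct m1. simpl.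
    destruct (excluded_middle_informative _) as [e|_]; [|reflexivity].
    exfalso; destruct (arr_idx _ _ e) as [e2 _]; inversion e2. }
  assert (G12 : G1 = G2).
  { apply sf_ext.
    - intros []. exact (sf_obj _ _ Ha false). exact (sf_obj _ _ Ha true). exact (sf_obj _ _ Hb true).
    - intros [] [] m; simpl in m; destruct m.
      + exact (sf_arr _ _ Ha false true tt).
      + transitivity (arr (comp (@fmor _ _ G1 q1 q2 tt) (@fmor _ _ G1 q0 q1 tt))).
        { rewrite <- fmor_comp. reflexivity. }
        transitivity (arr (comp (@fmor _ _ G2 q1 q2 tt) (@fmor _ _ G2 q0 q1 tt))).
        { apply arr_comp. exact (sf_arr _ _ Hb false true tt). exact (sf_arr _ _ Ha false true tt). }
        rewrite <- fmor_comp. reflexivity.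
      + exact (sf_arr _ _ Hb false true tt). }
  subst G2. rewrite HG1 in HG2.
  assert (K := sf_arr _ _ HG2 (q0, x) (q2, z) ((tt, f) : @Hom (prod_sc PP A) (q0, x) (q2, z))).
  apply arr_inj in K. simpl in K.
  destruct (excluded_middle_informative _) as [e|ne] in K. discriminate K.
  apply ne. reflexivity.
Qed.

Lemma arr_BL (T : Type) (a b c d : unit) (l l' : list T) :
  @arr (BL T) a b l = @arr (BL T) c d l' -> l = l'.
Proof. intro H. exact (f_equal (fun s : Arr (BL T) => (projT2 s : list T)) H). Qed.

Lemma fac_unique (HA : exponentiable A) (x z : Ob A) (f : Hom x z)
  (p p' : {y : Ob A & (Hom y z * Hom x y)%type}) :
  f = comp (fst (projT2 p)) (snd (projT2 p)) -> f = comp (fst (projT2 p')) (snd (projT2 p')) -> p = p'.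
Proof.
  destruct p as [y [g h]], p' as [y' [g' h']]; simpl; intros Hf Hf'.
  destruct (HA (BL TT)) as [E [ev U]].
  assert (Hc : forall (b : bool) (p q r : Ob (prod_sc Two A)) (g : @Hom (prod_sc Two A) q r) (h : @Hom (prod_sc Two A) p q),
     [if b then inl (arr (snd (comp g h))) else inr (arr (snd (comp g h)))] =
     [if b then inl (arr (snd g)) else inr (arr (snd g)) : TT] ++ [if b then inl (arr (snd h)) else inr (arr (snd h))]).
  { intros b [pp pa] [qq qa] [rr ra] [g1 g2] [h1 h2].
    destruct pp, qq, rr; simpl in *; try (destruct g1; fail); try (destruct h1; fail). }
  pose (Fa := Build_Semifunctor (prod_sc Two A) (BL TT) (fun _ => tt)
                (fun p q m => ([inl (arr (snd m))] : @Hom (BL TT) tt tt)) (Hc true)).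
  pose (Fb := Build_Semifunctor (prod_sc Two A) (BL TT) (fun _ => tt)
                (fun p q m => ([inr (arr (snd m))] : @Hom (BL TT) tt tt)) (Hc false)).
  destruct (U _ Fa) as [Ga [HGa _]].
  destruct (U _ Fb) as [Gb [HGb _]].
  assert (Hm : sf_comp Ga (pt Two true) = sf_comp Gb (pt Two false)).
  { apply (transp_uniq _ _ _ ev U). rewrite !transpose_comp, HGa, HGb.
    apply sf_ext; [reflexivity|]. intros ? ? [e ?]; destruct e. }
  destruct (pair_to_P E Ga Gb (sf_obj _ _ Hm tt)) as [G [Ea Eb]].
  pose (F := sf_comp ev (prod_map_id A G)).
  assert (FA : sf_comp F (prod_map_id A (mk2 PP q0 q1 tt)) = Fa).
  { unfold F. rewrite <- transpose_comp, Ea. exact HGa. }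
  assert (FB : sf_comp F (prod_map_id A (mk2 PP q1 q2 tt)) = Fb).
  { unfold F. rewrite <- transpose_comp, Eb. exact HGb. }
  assert (L : forall y0 (g0 : Hom y0 z) (h0 : Hom x y0), f = comp g0 h0 ->
     @fmor _ _ F (q0, x) (q2, z) (tt, f) = [inr (arr g0); inl (arr h0)]).
  { intros y0 g0 h0 Hf0.
    assert (K1 := arr_BL _ _ _ _ _ _ _ (sf_arr _ _ FA (false, x) (true, y0) ((tt, h0) : @Hom (prod_sc Two A) (false, x) (true, y0)))).
    assert (K2 := arr_BL _ _ _ _ _ _ _ (sf_arr _ _ FB (false, y0) (true, z) ((tt, g0) : @Hom (prod_sc Two A) (false, y0) (true, z)))).
    simpl in K1, K2.
    transitivity (@fmor _ _ F (q1, y0) (q2, z) (tt, g0) ++ @fmor _ _ F (q0, x) (q1, y0) (tt, h0)).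
    { rewrite Hf0. exact (fmor_comp _ _ F (q0, x) (q1, y0) (q2, z) (tt, g0) (tt, h0)). }
    unfold F in *. simpl. rewrite K1, K2. reflexivity. }
  assert (Eq := eq_trans (eq_sym (L _ _ _ Hf)) (L _ _ _ Hf')).
  pose (gt := fun t : TT => match t with inl a => a | inr a => a end).
  assert (E1 := f_equal (fun l => match l with a :: _ => gt a | [] => arr g end) Eq).
  assert (E2 := f_equal (fun l => match l with _ :: a :: _ => gt a | _ => arr g end) Eq).
  simpl in E1, E2.
  destruct (arr_idx _ _ E1) as [-> _].
  apply arr_inj in E1. apply arr_inj in E2. subst. reflexivity.
Qed.
End Nec.

Section Suff.
Variable A : Semicat.
Hypothesis HU : unique_binary_factorization A.

Definition Fac (x z : Ob A) := {y : Ob A & (Hom y z * Hom x y)%type}.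

Lemma fac_ex (x z : Ob A) (f : Hom x z) :
  exists p : Fac x z, f = comp (fst (projT2 p)) (snd (projT2 p)).
Proof. destruct (HU x z f) as [p [Hp _]]. exists p. exact Hp. Qed.

Definition fac {x z : Ob A} (f : Hom x z) : Fac x z :=
  proj1_sig (constructive_indefinite_description _ (fac_ex x z f)).

Lemma fac_spec {x z : Ob A} (f : Hom x z) : f = comp (fst (projT2 (fac f))) (snd (projT2 (fac f))).
Proof. exact (proj2_sig (constructive_indefinite_description _ (fac_ex x z f))). Qed.

Lemma fac_uniq {x z : Ob A} (f : Hom x z) (y : Ob A) (g : Hom y z) (h : Hom x y) :
  f = comp g h -> fac f = existT _ y (g, h).
Proof.
  intro Hf. destruct (HU x z f) as [p [Hp Hu]].
  transitivity p. symmetry. apply Hu. apply fac_spec. apply Hu. exact Hf.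
Qed.

Lemma sig_pair_eq {x z : Ob A} (y y' : Ob A) (g : Hom y z) (h : Hom x y) (g' : Hom y' z) (h' : Hom x y') :
  existT (fun y => (Hom y z * Hom x y)%type) y (g, h) = existT _ y' (g', h') ->
  exists e : y = y', True.
Proof. intro H. apply (f_equal (@projT1 _ _)) in H. exists H. exact I. Qed.

Variable B : Semicat.

Definition HomE (F0 F1 : Ob A -> Ob B) : Type := forall x y : Ob A, Hom x y -> Hom (F0 x) (F1 y).

Definition compE (F0 F1 F2 : Ob A -> Ob B) (psi : HomE F1 F2) (phi : HomE F0 F1) : HomE F0 F2 :=
  fun x z f => comp (psi (projT1 (fac f)) z (fst (projT2 (fac f)))) (phi x (projT1 (fac f)) (snd (projT2 (fac f)))).

Lemma compE_assoc (F0 F1 F2 F3 : Ob A -> Ob B) (chi : HomE F2 F3) (psi : HomE F1 F2) (phi : HomE F0 F1) :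
  compE F0 F2 F3 chi (compE F0 F1 F2 psi phi) = compE F0 F1 F3 (compE F1 F2 F3 chi psi) phi.
Proof.
  apply functional_extensionality_dep; intro x.
  apply functional_extensionality_dep; intro z.
  apply functional_extensionality_dep; intro f.
  unfold compE.
  generalize (fac_spec f). destruct (fac f) as [y [g h]] eqn:Ef. simpl. intro Sf.
  generalize (fac_spec h). destruct (fac h) as [y2 [g2 h2]] eqn:Eh. simpl. intro Sh.
  generalize (fac_spec g). destruct (fac g) as [y3 [g3 h3]] eqn:Eg. simpl. intro Sg.
  assert (U1 : fac f = existT _ y2 (comp g g2, h2)).
  { apply fac_uniq. rewrite Sf, Sh at 1. apply comp_assoc. }
  rewrite Ef in U1.
  assert (e := f_equal (@projT1 _ _) U1). simpl in e. subst y2.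
  apply inj_pair2 in U1. injection U1 as Ug Uh. subst h2.
  assert (U2 : fac f = existT _ y3 (g3, comp h3 h)).
  { apply fac_uniq. rewrite Sf, Sg at 1. symmetry. apply comp_assoc. }
  rewrite Ef in U2.
  assert (e := f_equal (@projT1 _ _) U2). simpl in e. subst y3.
  apply inj_pair2 in U2. injection U2 as Ug2 Uh2. subst g3.
  assert (U3 : fac g = existT _ y (g, g2)).
  { apply fac_uniq. exact Ug. }
  rewrite Eg in U3. apply inj_pair2 in U3. injection U3 as U3. subst h3.
  apply comp_assoc.
Qed.

Definition Expo : Semicat :=
  {| Ob := Ob A -> Ob B; Hom := HomE; comp := compE; comp_assoc := compE_assoc |}.


Definition evE : Semifunctor (prod_sc Expo A) B.
Proof.
  refine (Build_Semifunctor (prod_sc Expo A) B (fun p => (fst p) (snd p))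
            (fun p q m => (fst m) (snd p) (snd q) (snd m)) _).
  intros [F0 x] [F1 y] [F2 z] [psi g] [phi h]. simpl. unfold compE.
  set (s := fac _). assert (Es : s = existT _ y (g, h)) by (apply fac_uniq; reflexivity).
  clearbody s. subst s. reflexivity.
Defined.

Lemma arrE {F0 F1 F0' F1' : Ob A -> Ob B} (phi : HomE F0 F1) (phi' : HomE F0' F1') :
  F0 = F0' -> F1 = F1' -> (forall x y f, arr (phi x y f) = arr (phi' x y f)) ->
  @arr Expo F0 F1 phi = @arr Expo F0' F1' phi'.
Proof.
  intros -> -> H. assert (phi = phi') as ->; [|reflexivity].
  apply functional_extensionality_dep; intro x.
  apply functional_extensionality_dep; intro y.
  apply functional_extensionality_dep; intro f.
  apply arr_inj, H.
Qed.

Lemma expo_univ (C : Semicat) (F : Semifunctor (prod_sc C A) B) :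
  exists! G : Semifunctor C Expo, sf_comp evE (prod_map_id A G) = F.
Proof.
  assert (Hc : forall (c1 c2 c3 : Ob C) (k' : Hom c2 c3) (k : Hom c1 c2),
    (fun x z (f : Hom x z) => @fmor _ _ F (c1, x) (c3, z) (comp k' k, f)) =
    compE (fun x => fobj F (c1, x)) (fun x => fobj F (c2, x)) (fun x => fobj F (c3, x))
      (fun x z f => @fmor _ _ F (c2, x) (c3, z) (k', f))
      (fun x z f => @fmor _ _ F (c1, x) (c2, z) (k, f))).
  { intros. apply functional_extensionality_dep; intro x.
    apply functional_extensionality_dep; intro z.
    apply functional_extensionality_dep; intro f.
    unfold compE. generalize (fac_spec f). destruct (fac f) as [y [g h]]. simpl. intro Sf.
    subst f. exact (fmor_comp _ _ F (c1, x) (c2, y) (c3, z) (k', g) (k, h)). }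
  exists (Build_Semifunctor C Expo (fun c x => fobj F (c, x))
            (fun c c' k x y f => @fmor _ _ F (c, x) (c', y) (k, f)) Hc).
  split.
  - apply sf_ext; [intros [c x]; reflexivity | intros [c x] [c' y] [k f]; reflexivity].
  - intros G' HG'. apply sf_ext.
    + intros c. apply functional_extensionality; intro x. exact (eq_sym (sf_obj _ _ HG' (c, x))).
    + intros c c' k. apply arrE.
      * apply functional_extensionality; intro x. exact (eq_sym (sf_obj _ _ HG' (c, x))).
      * apply functional_extensionality; intro x. exact (eq_sym (sf_obj _ _ HG' (c', x))).
      * intros x y f. exact (eq_sym (sf_arr _ _ HG' (c, x) (c', y) (k, f))).
Qed.
End Suff.

Theorem proposition3p7 (A : Semicat) :
  exponentiable A <-> unique_binary_factorization A.
Proof.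
  split.
  - intros HA x z f. destruct (fac_exists A HA x z f) as [p Hp].
    exists p. split; [exact Hp|]. intros p' Hp'. exact (fac_unique A HA x z f p p' Hp Hp').
  - intros HU B. exists (Expo A HU B), (evE A HU B). exact (expo_univ A HU B).
Qed.
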